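(* Let $a<b$, let $\mu$ be a Steffensen–Popoviciu measure on $[a,b]$ with barycenter $b_\mu=\frac{1}{\mu([a,b])}\int_a^b x\,d\mu(x)$, and let $f:[a,b]\to\mathbb{R}$ be a left almost convex function, with $c<d$ interior points of $[a,b]$ as in the definition of left almost convexity (so $f|_{[c,b]}$ is convex and $f\ge h$ on $[a,c]$, where $h$ is the affine function with $h(c)=f(c)$, $h(d)=f(d)$). Suppose that (i) $b_\mu\ge c$; and (ii) $\displaystyle\int_a^d\Big(\big(f(x)-f(c)\big)(d-c)-\big(f(d)-f(c)\big)(x-c)\Big)\,d\mu(x)\ge0.$ Then \[ f(b_\mu)\le\frac{1}{\mu([a,b])}\int_a^b f(x)\,d\mu(x). \]
   Context: A Steffensen–Popoviciu measure on a compact interval $[a,b]$ is a real (signed, finite) Borel measure $\mu$ on $[a,b]$ with $\mu([a,b])>0$ such that $\int_{[a,b]} g(x)\,d\mu(x)\ge0$ for every continuous convex function $g:[a,b]\to[0,\infty)$. Its barycenter is $b_\mu=\frac{1}{\mu([a,b])}\int_a^b x\,d\mu(x)$. A real-valued function $f$ defined on an interval $I$ is called left almost convex if it is integrable and there is a pair of interior points $c<d$ of $I$ such that: (i) $f|_{[c,\infty)\cap I}$ is convex; and (ii) $f\ge h$ on $(-\infty,c]\cap I$, where $h$ is the affine function joining the points $(c,f(c))$ and $(d,f(d))$. Here ''integrable'' is understood as integrable with respect to the total variation $|\mu|$ of the measure under consideration, so that all integrals in the statement exist. *)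

(* Defs.v *)
From HB Require Import structures.
From mathcomp Require Import all_boot all_order all_algebra.
From mathcomp Require Import all_classical all_reals all_analysis.
Set Implicit Arguments.
Unset Strict Implicit.
Unset Printing Implicit Defensive.
Import Order.TTheory GRing.Theory Num.Theory numFieldNormedType.Exports.
Local Open Scope classical_set_scope.
Local Open Scope ring_scope.

Notation BorelR R := (measurableTypeR R).

(* A finite signed Borel measure on [a,b], represented by its Jordan
   decomposition mu = mup - mun: two finite Borel measures on R, both
   concentrated on [a,b], mutually singular. *)
Definition signed_measure_on (R : realType) (a b : R)
    (mup mun : {finite_measure set BorelR R -> \bar R}) : Prop :=
  [/\ mup (~` `[a, b]%classic) = 0%E, mun (~` `[a, b]%classic) = 0%E &
      exists P : set (BorelR R), [/\ measurable P, mup (~` P) = 0%E & mun P = 0%E]].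

Definition sp_mass (R : realType) (mup mun : {finite_measure set BorelR R -> \bar R})
    (D : set R) : R := fine (mup D) - fine (mun D).

Definition sp_integral (R : realType) (mup mun : {finite_measure set BorelR R -> \bar R})
    (D : set R) (f : R -> R) : R :=
  Rintegral mup D f - Rintegral mun D f.

(* integrability with respect to the total variation |mu| = mup + mun *)
Definition sp_integrable (R : realType) (mup mun : {finite_measure set BorelR R -> \bar R})
    (D : set R) (f : R -> R) : Prop :=
  mup.-integrable D (EFin \o f) /\ mun.-integrable D (EFin \o f).

Definition sp_convex_on (R : realType) (D : set R) (f : R -> R) : Prop :=
  forall x y t : R, D x -> D y -> 0 <= t <= 1 ->
    f (t * x + (1 - t) * y) <= t * f x + (1 - t) * f y.

Definition SP_measure (R : realType) (a b : R)
    (mup mun : {finite_measure set BorelR R -> \bar R}) : Prop :=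
  [/\ signed_measure_on a b mup mun,
      0 < sp_mass mup mun `[a, b]%classic &
      forall g : R -> R, {within `[a, b]%classic, continuous g} ->
        sp_convex_on `[a, b]%classic g -> (forall x, `[a, b]%classic x -> 0 <= g x) ->
        0 <= sp_integral mup mun `[a, b]%classic g].

Definition sp_barycenter (R : realType) (a b : R)
    (mup mun : {finite_measure set BorelR R -> \bar R}) : R :=
  sp_integral mup mun `[a, b]%classic id / sp_mass mup mun `[a, b]%classic.

Definition sp_chord (R : realType) (f : R -> R) (c d : R) (x : R) : R :=
  f c + (f d - f c) / (d - c) * (x - c).

Definition left_almost_convex_with (R : realType) (a b : R)
    (mup mun : {finite_measure set BorelR R -> \bar R}) (f : R -> R) (c d : R) : Prop :=
  [/\ sp_integrable mup mun `[a, b]%classic f,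
      a < c /\ c < d /\ d < b,
      sp_convex_on `[c, b]%classic f &
      forall x, `[a, c]%classic x -> sp_chord f c d x <= f x].

(* Main.v *)
Require Import Defs.
From HB Require Import structures.
From mathcomp Require Import all_boot all_order all_algebra.
From mathcomp Require Import all_classical all_reals all_analysis.
From mathcomp Require Import measurable_realfun ring lra.
Import Order.TTheory GRing.Theory Num.Theory numFieldNormedType.Exports.
Local Open Scope classical_set_scope.
Local Open Scope ring_scope.

Set Implicit Arguments.
Unset Strict Implicit.
Unset Printing Implicit Defensive.

Definition cvx3 (R : realType) (p q : R) (g : R -> R) : Prop :=
  forall x y z, p <= x -> x < y -> y < z -> z <= q ->
    (z - x) * g y <= (z - y) * g x + (y - x) * g z.

Lemma conv_cvx3 (R : realType) (p q : R) (g : R -> R) :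
  (forall x y t : R, `[p, q]%classic x -> `[p, q]%classic y -> 0 <= t <= 1 ->
    g (t * x + (1 - t) * y) <= t * g x + (1 - t) * g y) -> cvx3 p q g.
Proof.
move=> H x y z px xy yz zq.
have zx : 0 < z - x by lra.
set t := (z - y) / (z - x).
have ht : (z - x) * t = z - y by rewrite /t mulrC divfK // gt_eqF.
have t01 : 0 <= t <= 1.
  apply/andP; split; first by rewrite divr_ge0 //; lra.
  by rewrite ler_pdivrMr //; lra.
clearbody t.
have Hx : `[p, q]%classic x by rewrite /= in_itv /=; apply/andP; split; lra.
have Hz : `[p, q]%classic z by rewrite /= in_itv /=; apply/andP; split; lra.
have := H x z t Hx Hz t01.
have -> : t * x + (1 - t) * z = y.
  apply: (mulfI (lt0r_neq0 zx)).
  have e : (z - x) * (1 - t) = y - x by rewrite mulrBr mulr1 ht; lra.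
  rewrite mulrDr !mulrA ht e; ring.
move=> Hg.
apply: le_trans (_ : (z - x) * (t * g x + (1 - t) * g z) <= _).
  by rewrite ler_pM2l.
have e : (z - x) * (1 - t) = y - x by rewrite mulrBr mulr1 ht; lra.
by rewrite mulrDr !mulrA ht e.
Qed.

Lemma cvx3_conv (R : realType) (p q p' q' : R) (g : R -> R) :
  p <= p' -> q' <= q -> cvx3 p q g ->
  forall x y t : R, `[p', q']%classic x -> `[p', q']%classic y -> 0 <= t <= 1 ->
    g (t * x + (1 - t) * y) <= t * g x + (1 - t) * g y.
Proof.
move=> pp qq H x y t /=; rewrite !in_itv /= => /andP[x1 x2] /andP[y1 y2] /andP[t0 t1].
have [->|t0'] := eqVneq t 0.
  by rewrite !mul0r !subr0 !mul1r !add0r.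
have [->|t1'] := eqVneq t 1.
  by rewrite !mul1r !subrr !mul0r !addr0.
have tp : 0 < t by rewrite lt_neqAle eq_sym t0' t0.
have tl : t < 1 by rewrite lt_neqAle t1' t1.
set w := t * x + (1 - t) * y.
have [xy|yx|exy] := ltgtP x y.
- have H3 := H x w y ltac:(lra) ltac:(rewrite /w; nra) ltac:(rewrite /w; nra) ltac:(lra).
  have e1 : y - w = t * (y - x) by rewrite /w; lra.
  have e2 : w - x = (1 - t) * (y - x) by rewrite /w; lra.
  rewrite e1 e2 in H3.
  have yx0 : 0 < y - x by lra.
  rewrite -(ler_pM2l yx0); nra.
- have H3 := H y w x ltac:(lra) ltac:(rewrite /w; nra) ltac:(rewrite /w; nra) ltac:(lra).
  have e1 : x - w = (1 - t) * (x - y) by rewrite /w; lra.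
  have e2 : w - y = t * (x - y) by rewrite /w; lra.
  rewrite e1 e2 in H3.
  have yx0 : 0 < x - y by lra.
  rewrite -(ler_pM2l yx0); nra.
- have -> : w = x by rewrite /w -exy; ring.
  rewrite -exy; lra.
Qed.

Lemma cvx3_le (R : realType) (p q : R) (g : R -> R) : cvx3 p q g ->
  forall x y z, p <= x -> x <= y -> y <= z -> z <= q ->
    (z - x) * g y <= (z - y) * g x + (y - x) * g z.
Proof.
move=> H x y z px xy yz zq.
have [exy|xy'] := eqVneq x y.
  by rewrite exy subrr mul0r addr0.
have [eyz|yz'] := eqVneq y z.
  by rewrite eyz subrr mul0r add0r.
apply: H => //; rewrite lt_neqAle ?xy' ?yz' ?xy ?yz //.
Qed.

Lemma cvx3_sub (R : realType) (p q p' q' : R) (g : R -> R) :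
  p <= p' -> q' <= q -> cvx3 p q g -> cvx3 p' q' g.
Proof.
move=> pp qq H x y z px xy yz zq; apply: H => //; lra.
Qed.

Lemma slope_le (R : realType) (p q : R) (g : R -> R) : cvx3 p q g ->
  forall u y z, p <= u -> u < y -> y < z -> z <= q ->
  (g y - g u) / (y - u) <= (g z - g y) / (z - y).
Proof.
move=> H u y z pu uy yz zq.
have h1 : 0 < y - u by lra.
have h2 : 0 < z - y by lra.
rewrite ler_pdivrMr // mulrAC ler_pdivlMr //.
have := H u y z pu uy yz zq; nra.
Qed.

Lemma cvx3_support (R : realType) (p q : R) (g : R -> R) : cvx3 p q g ->
  forall y, p < y -> y < q ->
  exists s, forall x, p <= x -> x <= q -> g y + s * (x - y) <= g x.
Proof.
move=> H y py yq.
pose S := [set (g y - g x) / (y - x) | x in [set x | p <= x < y]].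
have S0 : S !=set0.
  by exists ((g y - g p) / (y - p)); exists p => //=; rewrite lexx py.
have Sub : ubound S ((g q - g y) / (q - y)).
  move=> _ [u /andP[pu uy] <-]; exact: (slope_le H).
have hS : has_ubound S by exists ((g q - g y) / (q - y)).
exists (sup S) => x px xq.
have [xy|yx|->] := ltgtP x y.
- have : (g y - g x) / (y - x) <= sup S.
    by apply: ub_le_sup => //; exists x => //=; rewrite px xy.
  have h1 : 0 < y - x by lra.
  rewrite ler_pdivrMr //; nra.
- have : sup S <= (g x - g y) / (x - y).
    apply: ge_sup => // _ [u /andP[pu uy] <-]; exact: (slope_le H).
  have h1 : 0 < x - y by lra.
  rewrite ler_pdivlMr //; nra.
- by rewrite subrr mulr0 addr0.
Qed.

Lemma cvx3_lip (R : realType) (p q : R) (g : R -> R) : cvx3 p q g ->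
  forall y, p < y -> y < q ->
  forall x, p <= x -> x <= q ->
  `|g x - g y| <= (`|g p - g y| / (y - p) + `|g q - g y| / (q - y)) * `|x - y|.
Proof.
move=> H y py yq x px xq.
set A := `|g p - g y| / (y - p).
set B := `|g q - g y| / (q - y).
have hA : `|g p - g y| = A * (y - p) by rewrite /A divfK // gt_eqF // subr_gt0.
have hB : `|g q - g y| = B * (q - y) by rewrite /B divfK // gt_eqF // subr_gt0.
have A0 : 0 <= A by rewrite /A divr_ge0 // ltW // subr_gt0.
have B0 : 0 <= B by rewrite /B divr_ge0 // ltW // subr_gt0.
have n1 := ler_norm (g p - g y).
have n2 := ler_norm (g q - g y).
have n1' : - (g p - g y) <= `|g p - g y| by rewrite -normrN ler_norm.
have n2' : - (g q - g y) <= `|g q - g y| by rewrite -normrN ler_norm.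
clearbody A B.
have [xy|yx] := leP x y.
- have H1 := cvx3_le H px xy (ltW yq) (lexx q).
  have H2 := cvx3_le H (lexx p) px xy (ltW yq).
  have e : `|x - y| = y - x by rewrite distrC ger0_norm // subr_ge0.
  have yx0 : 0 <= y - x by lra.
  have k1 : g y - g x <= B * (y - x).
    have : (q - y) * (g y - g x) <= (y - x) * (g q - g y) by nra.
    have : (y - x) * (g q - g y) <= (y - x) * (B * (q - y)) by rewrite -hB ler_wpM2l.
    move=> h h'; have : (q - y) * (g y - g x) <= (q - y) * (B * (y - x)) by nra.
    by rewrite ler_pM2l // subr_gt0.
  have k2 : g x - g y <= A * (y - x).
    have : (y - p) * (g x - g y) <= (y - x) * (g p - g y) by nra.
    have : (y - x) * (g p - g y) <= (y - x) * (A * (y - p)) by rewrite -hA ler_wpM2l.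
    move=> h h'; have : (y - p) * (g x - g y) <= (y - p) * (A * (y - x)) by nra.
    by rewrite ler_pM2l // subr_gt0.
  rewrite e; apply/ler_normlP; split; nra.
- have H1 := cvx3_le H (lexx p) (ltW py) (ltW yx) xq.
  have H2 := cvx3_le H (ltW py) (ltW yx) xq (lexx q).
  have e : `|x - y| = x - y by rewrite ger0_norm // subr_ge0 ltW.
  have yx0 : 0 <= x - y by lra.
  have k1 : g y - g x <= A * (x - y).
    have : (y - p) * (g y - g x) <= (x - y) * (g p - g y) by nra.
    have : (x - y) * (g p - g y) <= (x - y) * (A * (y - p)) by rewrite -hA ler_wpM2l.
    move=> h h'; have : (y - p) * (g y - g x) <= (y - p) * (A * (x - y)) by nra.
    by rewrite ler_pM2l // subr_gt0.
  have k2 : g x - g y <= B * (x - y).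
    have : (q - y) * (g x - g y) <= (x - y) * (g q - g y) by nra.
    have : (x - y) * (g q - g y) <= (x - y) * (B * (q - y)) by rewrite -hB ler_wpM2l.
    move=> h h'; have : (q - y) * (g x - g y) <= (q - y) * (B * (x - y)) by nra.
    by rewrite ler_pM2l // subr_gt0.
  rewrite e; apply/ler_normlP; split; nra.
Qed.

Lemma cvx3_cont (R : realType) (p q : R) (g : R -> R) : cvx3 p q g ->
  forall y, p < y -> y < q -> {for y, continuous g}.
Proof.
move=> H y py yq.
have HL := cvx3_lip H py yq.
set K := (`|g p - g y| / (y - p) + `|g q - g y| / (q - y)) in HL.
have K0 : 0 <= K by rewrite /K addr_ge0 // divr_ge0 // ltW // subr_gt0.
clearbody K.
apply/cvgrPdist_lt => e e0.
apply/nbhs_normP.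
exists (Num.min (Num.min (y - p) (q - y)) (e / (K + 1))).
  rewrite /= !lt_min !subr_gt0 py yq /= divr_gt0 //; lra.
move=> x /=; rewrite !lt_min => /andP[/andP[h1 h2] h3].
have hx1 : p <= x by move: h1; rewrite ltr_norml; lra.
have hx2 : x <= q by move: h2; rewrite ltr_norml; lra.
have := HL x hx1 hx2.
rewrite distrC (distrC x y).
have : K * `|y - x| <= K * (e / (K + 1)) by rewrite ler_wpM2l // ltW.
have : K * (e / (K + 1)) < e.
  rewrite mulrA ltr_pdivrMr; last lra.
  nra.
lra.
Qed.

Lemma cvx3_glue (R : realType) (p q r s : R) (phi psi : R -> R) :
  cvx3 p q phi -> cvx3 q r psi -> phi q = psi q ->
  (forall x, p <= x -> x <= q -> phi q + s * (x - q) <= phi x) ->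
  (forall z, q <= z -> z <= r -> psi q + s * (z - q) <= psi z) ->
  cvx3 p r (fun x => if x <= q then phi x else psi x).
Proof.
move=> H1 H2 e S1 S2 x y z px xy yz zr /=.
have [zq|qz] := leP z q.
  rewrite (ltW (lt_le_trans yz zq)) (ltW (lt_trans xy (lt_le_trans yz zq))).
  exact: H1.
have [qx|xq] := leP q x.
  have yq : (y <= q) = false by apply/negbTE; rewrite -ltNge; lra.
  rewrite yq.
  have [->|xq'] := eqVneq x q.
    rewrite lexx e.
    apply: H2 => //; lra.
  have xq2 : (x <= q) = false by apply/negbTE; rewrite -ltNge lt_neqAle eq_sym xq' qx.
  rewrite xq2.
  by apply: H2.
rewrite (ltW xq).
set A := phi x. set C := psi z. set v := phi q.
have hA : v + s * (x - q) <= A by apply: S1; lra.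
have hC : v + s * (z - q) <= C by rewrite /v e; apply: S2; lra.
have I : (z - x) * v <= (z - q) * A + (q - x) * C by nra.
have [yq|qy] := leP y q.
- idtac.
  have H3 := cvx3_le H1 px (ltW xy) yq (lexx q).
  rewrite -/A -/v in H3.
  have h4 : (y - x) * ((z - x) * v) <= (y - x) * ((z - q) * A + (q - x) * C).
    by apply: ler_wpM2l; [lra|].
  have h5 : (z - x) * ((q - x) * phi y) <= (z - x) * ((q - y) * A + (y - x) * v).
    by apply: ler_wpM2l; [lra|].
  have qx0 : 0 < q - x by lra.
  rewrite -(ler_pM2l qx0); nra.
- idtac.
  have H3 := cvx3_le H2 (lexx q) (ltW qy) (ltW yz) zr.
  rewrite -/C -e -/v in H3.
  have h4 : (z - y) * ((z - x) * v) <= (z - y) * ((z - q) * A + (q - x) * C).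
    by apply: ler_wpM2l; [lra|].
  have h5 : (z - x) * ((z - q) * psi y) <= (z - x) * ((z - y) * v + (y - q) * C).
    by apply: ler_wpM2l; [lra|].
  have zq0 : 0 < z - q by lra.
  rewrite -(ler_pM2l zq0); nra.
Qed.

Lemma int_cont (R : realType) (mu : {finite_measure set BorelR R -> \bar R})
  (a b : R) (g : R -> R) :
  {within `[a, b]%classic, continuous g} -> mu.-integrable `[a, b]%classic (EFin \o g).
Proof.
move=> cg; apply: measurable_bounded_integrable.
- exact: measurable_itv.
- rewrite -ge0_fin_numE //; apply: fin_num_measure; exact: measurable_itv.
- apply: subspace_continuous_measurable_fun => //; exact: measurable_itv.
- have /compact_bounded[M [_ mrt]] := continuous_compact cg (@segment_compact R a b).
  by exists M; split; rewrite ?num_real // => ? ? ? ?; exact: mrt.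
Qed.

Lemma affine_cont (R : realType) (al s : R) : continuous (fun x : R => al + s * x).
Proof.
move=> x; apply: cvgD; first exact: cvg_cst.
apply: cvgM; [exact: cvg_cst | exact: cvg_id].
Qed.

Lemma within_cont (R : realType) (a b : R) (g : R -> R) :
  continuous g -> {within `[a, b]%classic, continuous g}.
Proof. exact: continuous_subspaceT. Qed.

Lemma spint_cont (R : realType) (mup mun : {finite_measure set BorelR R -> \bar R})
  (a b : R) (g : R -> R) :
  {within `[a, b]%classic, continuous g} -> sp_integrable mup mun `[a, b]%classic g.
Proof. by move=> cg; split; apply: int_cont. Qed.

Lemma EFinB_comp (R : realType) (g k : R -> R) :
  EFin \o (fun x => g x - k x) = (fun x => (EFin \o g) x - (EFin \o k) x)%E.
Proof. by apply/funext => x; rewrite /= EFinB. Qed.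

Lemma EFinD_comp (R : realType) (g k : R -> R) :
  EFin \o (fun x => g x + k x) = (fun x => (EFin \o g) x + (EFin \o k) x)%E.
Proof. by apply/funext => x; rewrite /= EFinD. Qed.

Lemma int_B (R : realType) (mu : {measure set BorelR R -> \bar R}) (D : set R) (g k : R -> R) :
  measurable D -> mu.-integrable D (EFin \o g) -> mu.-integrable D (EFin \o k) ->
  mu.-integrable D (EFin \o (fun x => g x - k x)).
Proof. by move=> mD ig ik; rewrite EFinB_comp; apply: integrableB. Qed.

Lemma int_D (R : realType) (mu : {measure set BorelR R -> \bar R}) (D : set R) (g k : R -> R) :
  measurable D -> mu.-integrable D (EFin \o g) -> mu.-integrable D (EFin \o k) ->
  mu.-integrable D (EFin \o (fun x => g x + k x)).
Proof. by move=> mD ig ik; rewrite EFinD_comp; apply: integrableD. Qed.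

Lemma spint_B (R : realType) (mup mun : {finite_measure set BorelR R -> \bar R})
  (D : set R) (g k : R -> R) : measurable D ->
  sp_integrable mup mun D g -> sp_integrable mup mun D k ->
  sp_integral mup mun D (fun x => g x - k x) = sp_integral mup mun D g - sp_integral mup mun D k.
Proof.
move=> mD [g1 g2] [k1 k2]; rewrite /sp_integral !RintegralB //; ring.
Qed.

Lemma spint_lin (R : realType) (mup mun : {finite_measure set BorelR R -> \bar R})
  (a b al s : R) :
  sp_integral mup mun `[a, b]%classic (fun x => al + s * x) =
  al * sp_mass mup mun `[a, b]%classic + s * sp_integral mup mun `[a, b]%classic id.
Proof.
have mD : measurable `[a, b]%classic by exact: measurable_itv.
have ic : forall (mu : {finite_measure set BorelR R -> \bar R}) (k : R),
    mu.-integrable `[a, b]%classic (EFin \o (fun _ => k)).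
  by move=> mu k; apply: int_cont; apply: within_cont; exact: cst_continuous.
have ii : forall (mu : {finite_measure set BorelR R -> \bar R}),
    mu.-integrable `[a, b]%classic (EFin \o id).
  by move=> mu; apply: int_cont; apply: within_cont => x; exact: cvg_id.
have im : forall (mu : {finite_measure set BorelR R -> \bar R}),
    mu.-integrable `[a, b]%classic (EFin \o ( *%R s)).
  move=> mu; apply: int_cont; apply: within_cont => x.
  apply: cvgM; [exact: cvg_cst | exact: cvg_id].
rewrite /sp_integral /sp_mass !RintegralD //.
rewrite !Rintegral_cst // !RintegralZl //.
  ring.
all: first [exact: ii | exact: ic | exact: im].
Qed.

Lemma affine_convex (R : realType) (D : set R) (al s : R) :
  sp_convex_on D (fun x => al + s * x).
Proof.
move=> x y t _ _ _.
have -> : al + s * (t * x + (1 - t) * y) = t * (al + s * x) + (1 - t) * (al + s * y) by ring.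
exact: lexx.
Qed.

Lemma cvx3_subaff (R : realType) (p q al s : R) (g : R -> R) :
  cvx3 p q g -> cvx3 p q (fun x => g x - (al + s * x)).
Proof.
move=> H x y z px xy yz zq /=.
have := H x y z px xy yz zq.
have e : (z - x) * (al + s * y) = (z - y) * (al + s * x) + (y - x) * (al + s * z) by ring.
move=> h; rewrite !mulrBr e; lra.
Qed.

Lemma step_jensen (R : realType) (a b : R)
    (mup mun : {finite_measure set BorelR R -> \bar R}) (G : R -> R) (be : R) :
  SP_measure a b mup mun ->
  sp_integral mup mun `[a, b]%classic id = be * sp_mass mup mun `[a, b]%classic ->
  cvx3 (a - 1) (b + 1) G -> a <= be -> be <= b ->
  (forall y, a <= y -> y <= b -> {for y, continuous G}) ->
  G be * sp_mass mup mun `[a, b]%classic <= sp_integral mup mun `[a, b]%classic G.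
Proof.
move=> [_ _ SP] Hid H3 abe beb Gc.
have [s0 Hs] := cvx3_support H3 (y:=be) ltac:(lra) ltac:(lra).
pose g := fun x => G x - ((G be - s0 * be) + s0 * x).
have gc : {within `[a, b]%classic, continuous g}.
  apply: continuous_in_subspaceT => y; rewrite inE /= in_itv /= => /andP[h1 h2].
  apply: cvgB; first exact: Gc.
  exact: affine_cont.
have Gcw : {within `[a, b]%classic, continuous G}.
  apply: continuous_in_subspaceT => y; rewrite inE /= in_itv /= => /andP[h1 h2].
  exact: Gc.
have gconv : sp_convex_on `[a, b]%classic g.
  apply: (cvx3_conv (p := a - 1) (q := b + 1)); [lra | lra |].
  exact: cvx3_subaff.
have gpos : forall x, `[a, b]%classic x -> 0 <= g x.
  move=> x; rewrite /= in_itv /= => /andP[h1 h2].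
  have := Hs x ltac:(lra) ltac:(lra); rewrite /g; lra.
have := SP g gc gconv gpos.
rewrite /g spint_B; last 3 first.
- exact: measurable_itv.
- exact: spint_cont.
- apply: spint_cont; apply: within_cont; exact: affine_cont.
rewrite spint_lin Hid; lra.
Qed.

Lemma step_bary (R : realType) (a b : R)
    (mup mun : {finite_measure set BorelR R -> \bar R}) (be : R) :
  SP_measure a b mup mun ->
  sp_integral mup mun `[a, b]%classic id = be * sp_mass mup mun `[a, b]%classic ->
  be <= b.
Proof.
move=> [_ mpos SP] Hid.
have := SP (fun x => b + (-1) * x).
rewrite spint_lin Hid.
move=> /(_ (within_cont (@affine_cont R b (-1))) (@affine_convex R _ b (-1))).
have : forall x : R, `[a, b]%classic x -> 0 <= b + -1 * x.
  by move=> x; rewrite /= in_itv /= => /andP[h1 h2]; lra.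
move=> h /(_ h) h2.
have : 0 <= (b - be) * sp_mass mup mun `[a, b]%classic by lra.
rewrite pmulr_lge0 // subr_ge0 //.
Qed.

Lemma cvx3_aff (R : realType) (p q al s x0 : R) :
  cvx3 p q (fun x => al + s * (x - x0)).
Proof.
move=> x y z _ _ _ _ /=.
have -> : (z - x) * (al + s * (y - x0)) =
  (z - y) * (al + s * (x - x0)) + (y - x) * (al + s * (z - x0)) by ring.
exact: lexx.
Qed.

Lemma lower_chord (R : realType) (b c d : R) (f : R -> R) :
  c < d -> cvx3 c b f -> forall z, d <= z -> z <= b ->
  f d + (f d - f c) / (d - c) * (z - d) <= f z.
Proof.
move=> cd H z dz zb.
have [s0 e0] : exists s0, s0 = (f d - f c) / (d - c) by eexists.
rewrite -e0.
have hs0 : s0 * (d - c) = f d - f c by rewrite e0 divfK // gt_eqF // subr_gt0.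
have := cvx3_le H (lexx c) (ltW cd) dz zb.
have dc : 0 < d - c by lra.
move=> h.
have : (d - c) * (f d + s0 * (z - d)) <= (d - c) * f z by nra.
by rewrite ler_pM2l.
Qed.

Lemma Gd_cvx (R : realType) (a b c d t : R) (f : R -> R) :
  a < c -> c < d -> d <= t -> t < b -> cvx3 c b f ->
  cvx3 (a - 1) (b + 1) (fun x => if x <= d then sp_chord f c d x else
     if x <= t then f x else f t + (f b - f t) / (b - t) * (x - t)).
Proof.
move=> ac cd dt tb H.
have [s0 e0] : exists s0, s0 = (f d - f c) / (d - c) by eexists.
have hs0 : s0 * (d - c) = f d - f c by rewrite e0 divfK // gt_eqF // subr_gt0.
have [sl el] : exists sl, sl = (f b - f t) / (b - t) by eexists.
have hsl : sl * (b - t) = f b - f t by rewrite el divfK // gt_eqF // subr_gt0.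
rewrite /sp_chord -e0 -el.
have LC := lower_chord cd H.
rewrite -e0 in LC.
have hsls0 : s0 <= sl.
  have h1 := cvx3_le H (ltW cd) dt (ltW tb) (lexx b).
  have h2 := LC b (ltW (le_lt_trans dt tb)) (lexx b).
  have : (b - t) * s0 <= (b - t) * sl.
    have : (b - d) * ((b - t) * s0) <= (b - d) * ((b - t) * sl) by nra.
    by rewrite ler_pM2l // subr_gt0; lra.
  by rewrite ler_pM2l // subr_gt0.
apply: (cvx3_glue (s := s0)).
- exact: cvx3_aff.
- apply: (cvx3_glue (s := sl)).
  + apply: (cvx3_sub (p := c) (q := b)) => //; lra.
  + exact: cvx3_aff.
  + by rewrite subrr mulr0 addr0.
  + move=> x dx xt.
    have [->|xt'] := eqVneq x t; first by rewrite subrr mulr0 addr0.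
    have := cvx3_le H (ltW (lt_le_trans cd dx)) xt (ltW tb) (lexx b).
    move=> h.
    have bt : 0 < b - t by lra.
    have : (b - t) * (f t + sl * (x - t)) <= (b - t) * f x by nra.
    by rewrite ler_pM2l.
  + by move=> z _ _; rewrite subrr mulr0 addr0 lexx.
- by rewrite dt hs0; ring.
- move=> x _ _.
  have -> : f c + s0 * (d - c) + s0 * (x - d) = f c + s0 * (x - c) by ring.
  exact: lexx.
- move=> z dz zb.
  rewrite dt.
  have [zt|tz] := leP z t.
  + by apply: LC => //; lra.
  + have h1 := LC t dt (ltW tb).
    have : s0 * (z - t) <= sl * (z - t) by rewrite ler_pM2r // subr_gt0.
    lra.
Qed.

Lemma split4 (R : realType) (mu : {finite_measure set BorelR R -> \bar R})
  (a b d t : R) (k : R -> R) :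
  a <= d -> d <= t -> t < b -> mu.-integrable `[a, b]%classic (EFin \o k) ->
  Rintegral mu `[a, b]%classic k =
  Rintegral mu `[a, d]%classic k + Rintegral mu `]d, t]%classic k +
  Rintegral mu `]t, b[%classic k + Rintegral mu `[b, b]%classic k.
Proof.
move=> ad dt tb ik.
have e1 : `[a, b]%classic = `[a, d]%classic `|` `]d, b]%classic.
  by rewrite -itv_bndbnd_setU // bnd_simp; lra.
have e2 : `]d, b]%classic = `]d, t]%classic `|` `]t, b]%classic.
  by rewrite -itv_bndbnd_setU // bnd_simp; lra.
have e3 : `]t, b]%classic = `]t, b[%classic `|` `[b, b]%classic.
  by rewrite -itv_bndbnd_setU // bnd_simp; lra.
have m := @measurable_itv R.
have ik2 : mu.-integrable `]d, b]%classic (EFin \o k).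
  by apply: integrableS ik => //; rewrite e1; exact: subsetUr.
have ik3 : mu.-integrable `]t, b]%classic (EFin \o k).
  by apply: integrableS ik2 => //; rewrite e2; exact: subsetUr.
rewrite e1 Rintegral_setU //; last 2 first.
  by rewrite -e1.
  by apply/eqP; rewrite -subset0 => x [] /=; rewrite !in_itv /= => /andP[h1 h2] /andP[h3 h4]; lra.
rewrite e2 Rintegral_setU //; last 2 first.
  by rewrite -e2.
  by apply/eqP; rewrite -subset0 => x [] /=; rewrite !in_itv /= => /andP[h1 h2] /andP[h3 h4]; lra.
rewrite e3 Rintegral_setU //; last 2 first.
  by rewrite -e3.
  by apply/eqP; rewrite -subset0 => x [] /=; rewrite !in_itv /= => /andP[h1 h2] /andP[h3 h4]; lra.
by rewrite !addrA.
Qed.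

Lemma step_err (R : realType) (a b c d t M : R)
    (mup mun : {finite_measure set BorelR R -> \bar R}) (f G : R -> R) :
  a < c -> c < d -> d <= t -> t < b ->
  sp_integrable mup mun `[a, b]%classic f -> sp_integrable mup mun `[a, b]%classic G ->
  (forall x, a <= x -> x <= d -> G x = sp_chord f c d x) ->
  (forall x, d < x -> x <= t -> G x = f x) ->
  G b = f b ->
  (forall x, t < x -> x < b -> - M <= f x - G x) ->
  (forall x, t < x -> x < b -> f x - G x <= 0) ->
  0 <= sp_integral mup mun `[a, d]%classic
         (fun x => (f x - f c) * (d - c) - (f d - f c) * (x - c)) ->
  sp_integral mup mun `[a, b]%classic G - M * fine (mup `]t, b[%classic)
    <= sp_integral mup mun `[a, b]%classic f.
Proof.
move=> ac cd dt tb [fi1 fi2] [Gi1 Gi2] ead edt eb lM l0 hii.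
have m := @measurable_itv R.
pose k := fun x => f x - G x.
have ik1 : mup.-integrable `[a, b]%classic (EFin \o k) by apply: int_B.
have ik2 : mun.-integrable `[a, b]%classic (EFin \o k) by apply: int_B.
have E : sp_integral mup mun `[a, b]%classic f - sp_integral mup mun `[a, b]%classic G
   = sp_integral mup mun `[a, b]%classic k.
  by rewrite spint_B //.
suff : - M * fine (mup `]t, b[%classic) <= sp_integral mup mun `[a, b]%classic k by lra.
have ad : a <= d by lra.
rewrite /sp_integral (split4 ad dt tb ik1) (split4 ad dt tb ik2).
have Z : forall (mu : {finite_measure set BorelR R -> \bar R}),
    Rintegral mu `]d, t]%classic k = 0 /\ Rintegral mu `[b, b]%classic k = 0.
  move=> mu; split.
  - rewrite (@eq_Rintegral _ _ _ mu _ (fun _ => 0)); first by rewrite Rintegral_cst // mul0r.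
    move=> x; rewrite inE /= in_itv /= => /andP[h1 h2]; rewrite /k edt //; ring.
  - rewrite (@eq_Rintegral _ _ _ mu _ (fun _ => 0)); first by rewrite Rintegral_cst // mul0r.
    move=> x; rewrite inE /= in_itv /= => /andP[h1 h2].
    have -> : x = b by lra.
    by rewrite /k eb subrr.
have [Z1 Z2] := Z mup.
have [Z3 Z4] := Z mun.
rewrite Z1 Z2 Z3 Z4 !addr0.
have iad1 : mup.-integrable `[a, d]%classic (EFin \o k).
  by apply: integrableS ik1 => //; apply: subset_itvl; rewrite bnd_simp; lra.
have iad2 : mun.-integrable `[a, d]%classic (EFin \o k).
  by apply: integrableS ik2 => //; apply: subset_itvl; rewrite bnd_simp; lra.
have Had : 0 <= Rintegral mup `[a, d]%classic k - Rintegral mun `[a, d]%classic k.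
  have eK : forall (mu : {finite_measure set BorelR R -> \bar R}),
    mu.-integrable `[a, d]%classic (EFin \o k) ->
    Rintegral mu `[a, d]%classic (fun x => (f x - f c) * (d - c) - (f d - f c) * (x - c))
    = (d - c) * Rintegral mu `[a, d]%classic k.
    move=> mu ik; rewrite -RintegralZl //.
    apply: eq_Rintegral => x; rewrite inE /= in_itv /= => /andP[h1 h2].
    rewrite /k ead // /sp_chord.
    have dc : d - c != 0 by rewrite gt_eqF // subr_gt0.
    field; exact: dc.
  move: hii; rewrite /sp_integral (eK mup iad1) (eK mun iad2) -mulrBr.
  by rewrite pmulr_rge0 // subr_gt0.
have itb1 : mup.-integrable `]t, b[%classic (EFin \o k).
  by apply: integrableS ik1 => //; apply: subset_itvW; lra.
have itb2 : mun.-integrable `]t, b[%classic (EFin \o k).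
  by apply: integrableS ik2 => //; apply: subset_itvW; lra.
have icst : forall (mu : {finite_measure set BorelR R -> \bar R}) (r : R),
    mu.-integrable `]t, b[%classic (EFin \o (fun _ => r)).
  move=> mu r.
  have ic : mu.-integrable `[a, b]%classic (EFin \o (fun _ => r)).
    by apply: int_cont; apply: within_cont; exact: cst_continuous.
  by apply: integrableS ic => //; apply: subset_itvW; lra.
have H1 : - M * fine (mup `]t, b[%classic) <= Rintegral mup `]t, b[%classic k.
  rewrite -Rintegral_cst //; apply: le_Rintegral => //; first exact: icst.
  by move=> x; rewrite /= in_itv /= => /andP[h1 h2]; apply: lM.
have H2 : Rintegral mun `]t, b[%classic k <= 0.
  rewrite -(mul0r (fine (mun `]t, b[%classic))) -Rintegral_cst //.
  apply: le_Rintegral => //; first exact: icst.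
  by move=> x; rewrite /= in_itv /= => /andP[h1 h2]; apply: l0.
lra.
Qed.

Lemma small_meas (R : realType) (mu : {finite_measure set BorelR R -> \bar R})
    (d b M e : R) : d < b -> 0 <= M -> 0 < e ->
  exists t, [/\ d <= t, t < b & M * fine (mu `]t, b[%classic) <= e].
Proof.
move=> db M0 e0.
have bd : 0 < b - d by lra.
pose F := fun n : nat => `]b - (b - d) / n.+1%:R, b[%classic.
have mF : forall n, measurable (F n) by move=> n; exact: measurable_itv.
have capF : \bigcap_n F n = set0.
  rewrite -subset0 => x Hx.
  have [h1 h2] : b - (b - d) / 1%:R < x /\ x < b.
    by have := Hx 0%N I; rewrite /F /= in_itv /= => /andP[].
  have bx : 0 < (b - x) / (b - d) by rewrite divr_gt0 //; lra.
  have [k hk] := ltr_add_invr bx; rewrite add0r in hk.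
  have := Hx k I; rewrite /F /= in_itv /= => /andP[h3 _].
  have : (b - d) / k.+1%:R < b - x.
    by rewrite mulrC -ltr_pdivlMr // .
  move=> h; move: h3; rewrite ltrBlDl -ltrBlDr => h3; move: (lt_trans h3 h); by rewrite ltxx.
have nF : nonincreasing_seq F.
  move=> n m nm; apply/subsetPset => x; rewrite /F /= !in_itv /= => /andP[h1 h2].
  rewrite h2 andbT; apply: le_lt_trans h1.
  rewrite lerD2l lerN2 ler_pdivrMr // mulrAC ler_pdivlMr //.
  by rewrite ler_pM2l // ler_nat ltnS.
have cF := nonincreasing_cvg_mu (mu := mu) (F := F).
have : (mu \o F) x @[x --> \oo] --> 0%E.
  rewrite -(measure0 mu) -capF; apply: cF => //.
  - rewrite -ge0_fin_numE //; apply: fin_num_measure; exact: mF.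
  - by rewrite capF.
move/fine_cvgP => [_ /cvgrPdist_lt /(_ (e / (M + 1)))].
have eM : 0 < e / (M + 1) by rewrite divr_gt0 //; lra.
move=> /(_ eM) [N _ HN].
have := HN N (leqnn N); rewrite /= sub0r normrN => hN.
exists (b - (b - d) / N.+1%:R); split.
- have : (b - d) / N.+1%:R <= b - d.
    by rewrite ler_pdivrMr // ler_peMr ?ler1n //; lra.
  by move=> h; rewrite lerBrDr addrC -lerBrDr.
- have : 0 < (b - d) / N.+1%:R by rewrite divr_gt0.
  move: ((b - d) / N.+1%:R) => de; lra.
- have f0 : 0 <= fine (mu (F N)) by rewrite fine_ge0.
  have : fine (mu (F N)) < e / (M + 1) by rewrite ger0_norm in hN.
  move=> h.
  have : M * fine (mu (F N)) <= M * (e / (M + 1)) by rewrite ler_wpM2l // ltW.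
  have : M * (e / (M + 1)) <= e.
    rewrite mulrA ler_pdivrMr; last lra.
    nra.
  rewrite /F; lra.
Qed.


Unset Implicit Arguments.
Set Strict Implicit.

Theorem theorem3 (R : realType) (a b : R)
    (mup mun : {finite_measure set BorelR R -> \bar R})
    (f : R -> R) (c d : R) :
  a < b ->
  SP_measure a b mup mun ->
  left_almost_convex_with a b mup mun f c d ->
  c <= sp_barycenter a b mup mun ->
  0 <= sp_integral mup mun `[a, d]%classic
         (fun x => (f x - f c) * (d - c) - (f d - f c) * (x - c)) ->
  f (sp_barycenter a b mup mun) <=
    sp_integral mup mun `[a, b]%classic f / sp_mass mup mun `[a, b]%classic.
Proof.
move=> hab SPm [fint [ac [cd db]] fconv fch] cbe hii.
have [_ mpos _] := SPm.
have Hid : sp_integral mup mun `[a, b]%classic id =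
    sp_barycenter a b mup mun * sp_mass mup mun `[a, b]%classic.
  by rewrite /sp_barycenter divfK // gt_eqF.
move: cbe Hid; rewrite -/(sp_barycenter a b mup mun).
move: (sp_barycenter a b mup mun) => be cbe Hid.
rewrite ler_pdivlMr //.
have beb := step_bary SPm Hid.
have fc3 : cvx3 c b f := conv_cvx3 fconv.
have [s0 e0] : exists s0, s0 = (f d - f c) / (d - c) by eexists.
have hs0 : s0 * (d - c) = f d - f c by rewrite e0 divfK // gt_eqF // subr_gt0.
pose M := 2 * `|f d| + `|f b| + `|s0| * (b - d).
have M0 : 0 <= M by rewrite /M !addr_ge0 ?mulr_ge0 //; lra.
apply/ler_addgt0Pr => e epos.
have [t [dt tb small]] := small_meas mup db M0 epos.
pose G := fun x => if x <= d then sp_chord f c d x else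
     if x <= t then f x else f t + (f b - f t) / (b - t) * (x - t).
have G3 : cvx3 (a - 1) (b + 1) G := Gd_cvx ac cd dt tb fc3.
have Gc : forall y, a <= y -> y <= b -> {for y, continuous G}.
  by move=> y ay yb; apply: (cvx3_cont G3); lra.
have J := step_jensen SPm Hid G3 ltac:(lra) beb Gc.
have Gint : sp_integrable mup mun `[a, b]%classic G.
  apply: spint_cont; apply: continuous_in_subspaceT => y.
  by rewrite inE /= in_itv /= => /andP[h1 h2]; apply: Gc.
have [sl el] : exists sl, sl = (f b - f t) / (b - t) by eexists.
have hsl : sl * (b - t) = f b - f t by rewrite el divfK // gt_eqF // subr_gt0.
have Gl : forall x, t < x -> G x = f t + sl * (x - t).
  move=> x tx; rewrite /G el ifF; last by apply/negbTE; rewrite -ltNge; lra.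
  by rewrite ifF //; apply/negbTE; rewrite -ltNge.
have lup : forall x, t <= x -> x <= b -> f x <= f t + sl * (x - t).
  move=> x tx xb.
  have := cvx3_le fc3 (ltW (lt_le_trans cd dt)) tx xb (lexx b).
  have bt : 0 < b - t by lra.
  move=> h.
  have : (b - t) * f x <= (b - t) * (f t + sl * (x - t)) by nra.
  by rewrite ler_pM2l.
have Er := step_err (M := M) ac cd dt tb fint Gint.
have Er' := Er ltac:(by move=> x h1 h2; rewrite /G h2) ltac:(by move=> x h1 h2; rewrite /G ifF ?h2 //; apply/negbTE; rewrite -ltNge).
clear Er.
have Gb : G b = f b.
  rewrite Gl // hsl; ring.
have lowx : forall x, t < x -> x < b -> - M <= f x - G x.
  move=> x tx xb; rewrite Gl //.
  have LC := lower_chord cd fc3 (z := x) ltac:(lra) ltac:(lra).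
  rewrite -e0 in LC.
  have ft : f t <= `|f d| + `|f b|.
    have := cvx3_le fc3 (ltW cd) dt (ltW tb) (lexx b).
    have nd := ler_norm (f d); have nb := ler_norm (f b).
    have bd : 0 < b - d by lra.
    move=> h.
    have h1 : (b - t) * f d <= (b - t) * `|f d| by rewrite ler_wpM2l //; lra.
    have h2 : (t - d) * f b <= (t - d) * `|f b| by rewrite ler_wpM2l //; lra.
    have h3 : (t - d) * `|f d| >= 0 by rewrite mulr_ge0 //; lra.
    have h4 : (b - t) * `|f b| >= 0 by rewrite mulr_ge0 //; lra.
    have : (b - d) * f t <= (b - d) * (`|f d| + `|f b|).
      have -> : (b - d) * (`|f d| + `|f b|) = (b - t) * `|f d| + (t - d) * `|f b| + ((t - d) * `|f d| + (b - t) * `|f b|) by ring.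
      lra.
    by rewrite ler_pM2l.
  have lx : f t + sl * (x - t) <= `|f d| + `|f b|.
    have bt : 0 < b - t by lra.
    have e1 : (b - t) * (f t + sl * (x - t)) = (b - x) * f t + (x - t) * f b.
      have -> : (b - t) * (f t + sl * (x - t)) = (b - t) * f t + (sl * (b - t)) * (x - t) by ring.
      rewrite hsl; ring.
    have nb := ler_norm (f b).
    have : (b - t) * (f t + sl * (x - t)) <= (b - t) * (`|f d| + `|f b|).
      rewrite e1.
      have k1 : (b - x) * f t <= (b - x) * (`|f d| + `|f b|) by rewrite ler_wpM2l //; lra.
      have k2 : (x - t) * f b <= (x - t) * (`|f d| + `|f b|).
        rewrite ler_wpM2l //; first lra.
        have := normr_ge0 (f d); lra.
      have -> : (b - t) * (`|f d| + `|f b|) = (b - x) * (`|f d| + `|f b|) + (x - t) * (`|f d| + `|f b|) by ring.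
      lra.
    by rewrite ler_pM2l.
  have s0x : - (`|s0| * (b - d)) <= s0 * (x - d).
    have ns := ler_norm s0; have ns' : - s0 <= `|s0| by rewrite -normrN ler_norm.
    have n0 := normr_ge0 s0.
    nra.
  have nd' : - (f d) <= `|f d| by rewrite -normrN ler_norm.
  rewrite /M; lra.
have upx : forall x, t < x -> x < b -> f x - G x <= 0.
  move=> x tx xb; rewrite Gl //; have := lup x (ltW tx) (ltW xb); lra.
have Fin := Er' Gb lowx upx hii.
have Gbe : f be <= G be.
  rewrite /G.
  have [bd|bd] := leP be d.
    rewrite /sp_chord -e0.
    have := cvx3_le fc3 (lexx c) cbe bd (ltW db).
    have dc : 0 < d - c by lra.
    move=> h.
    have : (d - c) * f be <= (d - c) * (f c + s0 * (be - c)) by nra.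
    by rewrite ler_pM2l.
  have [bt|bt] := leP be t; first exact: lexx.
  rewrite -el; apply: lup => //; exact: ltW.
have : f be * sp_mass mup mun `[a, b]%classic <= G be * sp_mass mup mun `[a, b]%classic.
  by rewrite ler_pM2r.
lra.
Qed.
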